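(* Let $OG(e,2e)$ be (one component of) the variety of $e$-dimensional isotropic subspaces of $\mathbb C^{2e}$ equipped with a nondegenerate symmetric form, and let $U,V,W\in OG(e,2e)$ be pairwise in general position, i.e. pairwise intersecting trivially (which forces $e=2d$ to be even). Then there is a unique morphism $f\colon\mathbb P^1\to OG(e,2e)$ of degree $d$ with $f(0)=U$, $f(1)=V$, $f(\infty)=W$.
   Context: The degree of $f\colon\mathbb P^1\to OG(e,2e)$ is $\int f_*[\mathbb P^1]\cdot\tau_1$, where $\tau_1$ is the class of the Schubert divisor of $OG(e,2e)$ (the ample generator of its Picard group). Under the embedding $OG(e,2e)\subset G(e,2e)$ degrees double: a degree $d$ map to $OG$ has degree $2d$ as a map to $G(e,2e)$. *)

(* Defs.v *)
From HB Require Import structures.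
From mathcomp Require Import all_boot all_order all_algebra.
From mathcomp Require Import Rstruct complex.
Set Implicit Arguments. Unset Strict Implicit. Unset Printing Implicit Defensive.
Import Order.TTheory GRing.Theory Num.Theory.
Local Open Scope ring_scope.

Definition C : numClosedFieldType := (Rdefinitions.R)[i].

(* A subspace of C^n of dimension e is represented by an e x n matrix whose
   rows form a basis (row space, mxalgebra). *)

Definition nondeg_symmetric (n : nat) (Q : 'M[C]_n) : bool :=
  (Q^T == Q) && (Q \in unitmx).

Definition isotropic_of_dim (e n : nat) (Q : 'M[C]_n) (A : 'M[C]_(e, n)) : bool :=
  (\rank A == e) && (A *m Q *m A^T == 0).

Definition hform_eval (D : nat) (c : 'I_D.+1 -> C) (s t : C) : C :=
  \sum_(k < D.+1) c k * s ^+ k * t ^+ (D - k).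

(* Plücker-type coordinates of B : 'M_(e,n): the e x e minors on the
   column tuples sigma (all tuples; strictly increasing ones are the usual
   Plücker coordinates, the others are 0 or +- those). *)
Definition minor (e n : nat) (sigma : {ffun 'I_e -> 'I_n}) (B : 'M[C]_(e, n)) : C :=
  \det (colsub sigma B).

(* A point of P^1 is [s : t] with (s,t) <> (0,0).  A map f : P^1 -> OG(e,n)
   (n = 2e) is given by f s t : 'M_(e,n), whose row space is the image
   subspace.  It is a morphism whose composite with the Plücker embedding of
   the Grassmannian G(e,n) has degree D iff there are binary forms p_sigma of
   degree D without common zero on P^1 such that, at every point, the
   Plücker coordinates of f [s:t] are (p_sigma(s,t))_sigma (projectively). *)
Definition OG_morphism_of_Gdeg (e n : nat) (Q : 'M[C]_n) (D : nat)
  (f : C -> C -> 'M[C]_(e, n)) : Prop :=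
  (forall s t, (s, t) != (0, 0) -> isotropic_of_dim Q (f s t)) /\
  exists p : {ffun 'I_e -> 'I_n} -> 'I_D.+1 -> C,
    (forall s t, (s, t) != (0, 0) ->
        exists sigma, hform_eval (p sigma) s t != 0) /\
    (forall s t, (s, t) != (0, 0) ->
        exists B : 'M[C]_(e, n), (B == f s t)%MS /\
          forall sigma, minor sigma B = hform_eval (p sigma) s t).

(* Degree of f as a map to OG(e,2e): degree d as a map to OG means degree 2d
   as a map to G(e,2e). *)
Definition OG_morphism_of_deg (e n : nat) (Q : 'M[C]_n) (d : nat)
  (f : C -> C -> 'M[C]_(e, n)) : Prop :=
  OG_morphism_of_Gdeg Q (d.*2) f.

(* Main.v *)
Require Import Defs.
From HB Require Import structures.
From mathcomp Require Import all_boot all_order all_algebra.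
From mathcomp Require Import fingroup perm.
From mathcomp Require Import Rstruct complex.
Import Order.TTheory GRing.Theory Num.Theory.
Local Open Scope ring_scope.
Set Implicit Arguments. Unset Strict Implicit. Unset Printing Implicit Defensive.

Section CB.
Variable R : comNzRingType.

Lemma cauchy_binet (e n : nat) (A : 'M[R]_(e, n)) (N : 'M[R]_(n, e)) :
  \det (A *m N) = \sum_(phi : {ffun 'I_e -> 'I_n})
     (\prod_i N (phi i) i) * \det (mxsub id phi A).
Proof.
rewrite /(\det _).
transitivity (\sum_(s : 'S_e) (-1) ^+ s * \sum_(phi : {ffun 'I_e -> 'I_n})
     (\prod_j N (phi j) j) * \prod_i A i (phi (s i))).
  apply: eq_bigr => s _; congr (_ * _).
  transitivity (\prod_i \sum_k (A i k * N k (s i))).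
    by apply: eq_bigr => i _; rewrite mxE.
  rewrite bigA_distr_bigA /=.
  rewrite (reindex (fun phi : {ffun 'I_e -> 'I_n} => [ffun i => phi (s i)])); last first.
    exists (fun f : {ffun 'I_e -> 'I_n} => [ffun j => f ((s^-1)%g j)]) => f _.
      by apply/ffunP => j; rewrite !ffunE permKV.
    by apply/ffunP => j; rewrite !ffunE permK.
  apply: eq_bigr => phi _; rewrite big_split /= mulrC; congr (_ * _).
    by symmetry; rewrite (reindex_perm s); apply: eq_bigr => i _; rewrite ffunE.
  by apply: eq_bigr => i _; rewrite ffunE.
under eq_bigr do rewrite big_distrr /=.
rewrite exchange_big /=; apply: eq_bigr => phi _.
rewrite /(\det _) big_distrr /=; apply: eq_bigr => s _.
rewrite mulrCA; congr (_ * (_ * _)).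
by apply: eq_bigr => i _; rewrite mxE.
Qed.
End CB.

Section Core.
Variable F : numFieldType.

Lemma poly_vanish (P : {poly F}) : (forall x, P.[x] = 0) -> P = 0.
Proof.
move=> H; apply: (@roots_geq_poly_eq0 _ P [seq i%:R | i <- iota 0 (size P)]).
- by apply/allP => x /mapP [i _ ->]; apply/rootP; apply: H.
- rewrite map_inj_uniq ?iota_uniq // => i j /eqP; rewrite eqr_nat => /eqP.
  done.
- by rewrite size_map size_iota.
Qed.

Lemma poly_vanish_cof (P a : {poly F}) : a != 0 ->
  (forall x, a.[x] != 0 -> P.[x] = 0) -> P = 0.
Proof.
move=> a0 H; have : P * a = 0.
  apply: poly_vanish => x; rewrite hornerM.
  have [ax|ax] := eqVneq a.[x] 0; first by rewrite ax mulr0.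
  by rewrite H // mul0r.
by move/eqP; rewrite mulf_eq0 (negPf a0) orbF => /eqP.
Qed.

Variable e : nat.
Notation fT := {ffun 'I_e -> 'I_(e + e)}.
Definition lowf : fT := [ffun i => lshift e i].
Definition repf (i j : 'I_e) : fT :=
  [ffun k => if k == i then rshift e j else lshift e k].
Definition nhigh (s : fT) : nat := #|[pred k | (e <= s k)%N]|.

Lemma cramer_rep (Y : 'M[F]_(e, e + e)) i j :
  \det (mxsub id (repf i j) Y) =
  \sum_l Y l (rshift e j) * cofactor (mxsub id lowf Y) l i.
Proof.
rewrite (expand_det_col _ i); apply: eq_bigr => l _.
rewrite !mxE /repf ffunE eqxx; congr (_ * _).
rewrite /cofactor; congr (_ * \det _); apply/matrixP => u v.
by rewrite !mxE /lowf !ffunE eq_sym (negPf (neq_lift _ _)).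
Qed.

Lemma det_adj_gen n (A : 'M[F]_n) : \det A != 0 -> \det (\adj A) = \det A ^+ n.-1.
Proof.
move=> nz; case: n A nz => [|n] A nz; first by rewrite !det_mx00.
have := congr1 determinant (mul_adj_mx A).
rewrite det_mulmx det_scalar exprSr /= => /mulIf; apply; done.
Qed.

Lemma core (Q : fT -> {poly F})
  (HY : forall x, exists Y : 'M[F]_(e, e + e), forall s : fT, \det (mxsub id s Y) = (Q s).[x])
  (H0 : forall (s : fT) k, (e <= s k)%N -> (Q s).[0] = 0)
  (Ha : (Q lowf).[0] != 0) s : 'X^(nhigh s) %| Q s.
Proof.
set a := Q lowf.
pose dv : 'rV[{poly F}]_e := \row_k (if split (s k) is inr _ then 'X else 1).
pose M' : 'M[{poly F}]_e := \matrix_(i, k)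
  match split (s k) with inl j => (if i == j then a else 0)
                       | inr j => Q (repf i j) %/ 'X end.
have detM : \det (M' *m diag_mx dv) = \det M' * 'X^(nhigh s).
  rewrite det_mulmx det_diag; congr (_ * _).
  rewrite (bigID (fun k => (e <= s k)%N)) /= [X in _ * X]big1 ?mulr1; last first.
    move=> k; rewrite mxE; case: splitP => // j -> /=.
    by rewrite leq_addr.
  rewrite /nhigh -prodr_const; apply: eq_big => [k|k hk]; first by rewrite inE.
  rewrite mxE; case: splitP => // j eq; move: hk; rewrite eq leqNgt ltn_ord //.
have hdiv : forall i j, Q (repf i j) %/ 'X * 'X = Q (repf i j).
  move=> i j; apply: divpK.
  rewrite -['X]subr0 -polyC0 -root_factor_theorem; apply/rootP.
  by apply: (H0 _ i); rewrite /repf ffunE eqxx /= leq_addr.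
have key : forall x, a.[x] != 0 ->
    (\det (M' *m diag_mx dv)).[x] = a.[x] ^+ e.-1 * (Q s).[x].
  move=> x ax; have [Y HYx] := HY x.
  set Y1 := mxsub id lowf Y.
  have dY1 : \det Y1 = a.[x] by rewrite HYx.
  have -> : (\det (M' *m diag_mx dv)).[x] = \det (\adj Y1 *m mxsub id s Y).
    rewrite -horner_evalE -det_map_mx; congr (\det _); apply/matrixP => i k.
    rewrite mul_mx_diag !mxE.
    case: splitP => j hsk0.
      have hsk : s k = lshift e j by apply: val_inj.
      rewrite mulr1.
      have := congr1 (fun M : 'M[F]_e => M i j) (mul_adj_mx Y1); rewrite !mxE => hh.
      transitivity (\det Y1 *+ (i == j)).
        by case: eqVneq => _ /=; rewrite ?horner_evalE ?hornerC ?dY1.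
      rewrite -hh; apply: eq_bigr => l _; rewrite !mxE /lowf ffunE hsk //.
    have hsk : s k = rshift e j by apply: val_inj.
    rewrite hdiv /= ?horner_evalE -HYx cramer_rep.
    by apply: eq_bigr => l _; rewrite !mxE hsk mulrC.
  by rewrite det_mulmx det_adj_gen dY1 // HYx.
have anz : a != 0 by apply: contraNneq Ha => H; rewrite -/a H horner0.
have PE : \det (M' *m diag_mx dv) = a ^+ e.-1 * Q s.
  apply/eqP; rewrite -subr_eq0; apply/eqP; apply: (poly_vanish_cof anz).
  by move=> x ax; rewrite hornerD hornerN key // hornerM horner_exp subrr.
have : 'X^(nhigh s) %| a ^+ e.-1 * Q s by rewrite -PE detM dvdp_mulIr.
rewrite Gauss_dvdpr //; apply: coprimep_expl; apply: coprimep_expr.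
by rewrite coprimep_sym -['X]subr0 -polyC0 coprimep_XsubC rootE.
Qed.

End Core.
Arguments lowf {e}.
Arguments repf {e}.
Arguments nhigh {e}.

Section Pl.
Variable F : numFieldType.
Variable e : nat.
Notation fT := {ffun 'I_e -> 'I_(e + e)}.

Definition Yf (s t : F) : 'M[F]_(e, e + e) := row_mx (t%:M) (s%:M).
Definition highf : fT := [ffun i => rshift e i].

Lemma colsub_Yf (phi : fT) s t : mxsub id phi (Yf s t) =
  mxsub id phi (Yf 1 1) *m diag_mx (\row_k (if split (phi k) is inl _ then t else s)).
Proof.
apply/matrixP => i k; rewrite mul_mx_diag !mxE.
by case: splitP => j _; rewrite !mxE; case: (i == j); rewrite ?mulr1n ?mulr0n ?mul1r ?mul0r.
Qed.

Lemma minor_Yf (phi : fT) s t : \det (mxsub id phi (Yf s t)) =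
  \det (mxsub id phi (Yf 1 1)) * (s ^+ nhigh phi * t ^+ (e - nhigh phi)).
Proof.
rewrite colsub_Yf det_mulmx det_diag; congr (_ * _).
rewrite (bigID (fun k => (e <= phi k)%N)) /=; congr (_ * _).
  rewrite /nhigh -prodr_const; apply: eq_big => [k|k hk]; first by rewrite inE.
  rewrite mxE; case: splitP => // j eq; move: hk; rewrite eq leqNgt ltn_ord //.
have -> : (e - nhigh phi)%N = #|[pred k | ~~ (e <= phi k)%N]|.
  rewrite /nhigh -[X in (X - _)%N]card_ord -(cardC [pred k | (e <= phi k)%N]).
  rewrite addKn; apply: eq_card => k; rewrite !inE //.
rewrite -prodr_const; apply: eq_big => [k|k hk]; first by rewrite inE.
rewrite mxE; case: splitP => // j eq; move: hk; rewrite eq leq_addr //.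
Qed.

Lemma Yf_low s t : mxsub id lowf (Yf s t) = t%:M.
Proof. by apply/matrixP => i j; rewrite mxE /lowf ffunE row_mxEl. Qed.

Lemma Yf_high s t : mxsub id highf (Yf s t) = s%:M.
Proof. by apply/matrixP => i j; rewrite mxE /highf ffunE row_mxEr. Qed.

Lemma adj_mulE (Z : 'M[F]_(e, e + e)) i k :
  (\adj (mxsub id lowf Z) *m Z) i k =
  match split k with inl j => \det (mxsub id lowf Z) *+ (i == j)
                   | inr j => \det (mxsub id (repf i j) Z) end.
Proof.
case: splitP => j hk.
  have hk' : k = lshift e j by apply: val_inj.
  have := congr1 (fun M : 'M[F]_e => M i j) (mul_adj_mx (mxsub id lowf Z)).
  rewrite !mxE => <-; apply: eq_bigr => l _; rewrite !mxE /lowf ffunE hk' //.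
have hk' : k = rshift e j by apply: val_inj.
rewrite cramer_rep mxE; apply: eq_bigr => l _; rewrite !mxE hk' mulrC //.
Qed.

Lemma plucker_t (Y : 'M[F]_(e, e + e)) k s t : k != 0 -> t != 0 ->
  (forall tau : fT, \det (mxsub id tau Y) = k * \det (mxsub id tau (Yf s t))) ->
  (Y == Yf s t)%MS.
Proof.
move=> k0 t0 HY.
have E : \adj (mxsub id lowf Y) *m Y = (k * t ^+ e.-1) *: Yf s t.
  apply/matrixP => i l; rewrite adj_mulE mxE.
  transitivity (k * (\adj (mxsub id lowf (Yf s t)) *m Yf s t) i l).
    rewrite adj_mulE; case: splitP => j _; rewrite ?HY //.
    by rewrite mulrnAr.
  by rewrite Yf_low -scalemx1 adjZ adj1 -scalemxAl mul1mx mxE mulrA.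
have d1 : \det (mxsub id lowf Y) != 0.
  by rewrite HY Yf_low det_scalar mulf_neq0 // expf_neq0.
have uA : \adj (mxsub id lowf Y) \in unitmx.
  by rewrite unitmxE det_adj_gen // unitfE expf_neq0.
have -> : Y = ((k * t ^+ e.-1) *: invmx (\adj (mxsub id lowf Y))) *m Yf s t.
  by rewrite -scalemxAl scalemxAr -E mulKmx.
apply/eqmxP; apply: eqmxMfull; rewrite row_full_unit unitmxZ ?unitmx_inv //.
by rewrite unitfE mulf_neq0 // expf_neq0.
Qed.

Definition swp (k : 'I_(e + e)) : 'I_(e + e) :=
  unsplit (match split k with inl j => inr j | inr j => inl j end).

Lemma swpK : involutive swp.
Proof. by move=> k; rewrite /swp unsplitK; have := splitK k; case: (split k). Qed.

Lemma colsub_swp_Yf s t : mxsub id swp (Yf s t) = Yf t s.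
Proof.
apply/matrixP => i k; rewrite !mxE /swp unsplitK; case: (split k) => j //=.
Qed.

Lemma colsub_swp_comp (tau : fT) (Z : 'M[F]_(e, e + e)) :
  mxsub id tau (mxsub id swp Z) = mxsub id [ffun i => swp (tau i)] Z.
Proof. by apply/matrixP => i j; rewrite !mxE ffunE. Qed.

Lemma colsub_swpM (Z : 'M[F]_(e, e + e)) : mxsub id swp Z = Z *m mxsub id swp 1%:M.
Proof. by rewrite mulmx_colsub mulmx1. Qed.

Lemma plucker (Y : 'M[F]_(e, e + e)) k s t : k != 0 -> (s, t) != (0, 0) ->
  (forall tau : fT, \det (mxsub id tau Y) = k * \det (mxsub id tau (Yf s t))) ->
  (Y == Yf s t)%MS.
Proof.
move=> k0 st HY; have [t0|t0] := eqVneq t 0; last exact: (plucker_t k0 t0 HY).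
have s0 : s != 0 by apply: contraNneq st => ->; rewrite t0.
have H' : (mxsub id swp Y == Yf t s)%MS.
  apply: (plucker_t k0 s0) => tau.
  by rewrite colsub_swp_comp HY -colsub_swp_comp colsub_swp_Yf.
have -> : Y = mxsub id swp (mxsub id swp Y).
  by apply/matrixP => i j; rewrite !mxE swpK.
rewrite -[Yf s t]colsub_swp_Yf !(colsub_swpM (mxsub id swp _)).
rewrite [X in (_ == X)%MS]colsub_swpM.
by apply/eqmxP; apply: eqmxMr; apply/eqmxP.
Qed.

End Pl.

Section HF.
Variable D : nat.

Lemma hform_lin (I : finType) (w : I -> C) (c : I -> 'I_D.+1 -> C) s t :
  hform_eval (fun k => \sum_i w i * c i k) s t = \sum_i w i * hform_eval (c i) s t.
Proof.
rewrite /hform_eval.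
under eq_bigr do rewrite big_distrl /= big_distrl /=.
rewrite exchange_big /=; apply: eq_bigr => i _; rewrite big_distrr /=.
by apply: eq_bigr => k _; rewrite !mulrA.
Qed.

Lemma hform_mono (h : nat) (a : C) s t : (h <= D)%N ->
  hform_eval (fun k : 'I_D.+1 => if val k == h then a else 0) s t = a * (s ^+ h * t ^+ (D - h)).
Proof.
move=> hD; rewrite /hform_eval (bigD1 (inord h)) //= inordK ?ltnS // eqxx big1 ?addr0.
  by rewrite !mulrA.
by move=> k hk; case: eqVneq => [ek|]; rewrite ?mul0r //; move: hk; rewrite -ek inord_val eqxx.
Qed.

Lemma hform_single (h : nat) (c : 'I_D.+1 -> C) s t : (h <= D)%N ->
  (forall k : 'I_D.+1, val k != h -> c k = 0) ->
  hform_eval c s t = c (inord h) * (s ^+ h * t ^+ (D - h)).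
Proof.
move=> hD Hc; rewrite -hform_mono //; apply: eq_bigr => k _.
case: eqVneq => [ek|nk]; last by rewrite Hc.
by rewrite -ek inord_val.
Qed.

Lemma hform_s1 (c : 'I_D.+1 -> C) x :
  hform_eval c x 1 = (\poly_(k < D.+1) c (inord k)).[x].
Proof.
rewrite horner_poly /hform_eval; apply: eq_bigr => k _.
by rewrite expr1n mulr1 inord_val.
Qed.

Lemma hform_1t (c : 'I_D.+1 -> C) x :
  hform_eval c 1 x = (\poly_(k < D.+1) c (inord (D - k))).[x].
Proof.
rewrite horner_poly /hform_eval (reindex_inj rev_ord_inj) /=.
apply: eq_bigr => k _; rewrite expr1n mulr1.
have -> : rev_ord k = inord (D - k) by apply: val_inj; rewrite /= inordK ?subSS // ltnS leq_subr.
by rewrite subSS subKn // -ltnS.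
Qed.

End HF.

Lemma coef_dvdX (p : {poly C}) h k : 'X^h %| p -> (k < h)%N -> p`_k = 0.
Proof. by case/dvdpP => q ->; rewrite coefMXn => ->. Qed.

Lemma rank_adds_cap m1 m2 n (A : 'M[C]_(m1, n)) (B : 'M[C]_(m2, n)) :
  (A :&: B <= (0 : 'M_n))%MS -> \rank (A + B)%MS = (\rank A + \rank B)%N.
Proof. by move=> h; apply/eqP; rewrite (mxrank_adds_leqif A B).2. Qed.

Lemma iso_zero e n (Q : 'M[C]_n) (A : 'M[C]_(e, n)) (P : 'M[C]_e) :
  A *m Q *m A^T = 0 -> (P *m A) *m Q *m (P *m A)^T = 0.
Proof. by move=> h; rewrite trmx_mul !mulmxA -(mulmxA P) -(mulmxA P) h !mulmx0 mul0mx. Qed.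

Lemma setup e (Q : 'M[C]_(e + e)) (U V W : 'M[C]_(e, e + e)) :
  isotropic_of_dim Q U -> isotropic_of_dim Q V -> isotropic_of_dim Q W ->
  (U :&: V <= (0 : 'M[C]_(e + e)))%MS -> (V :&: W <= (0 : 'M[C]_(e + e)))%MS ->
  (U :&: W <= (0 : 'M[C]_(e + e)))%MS ->
  exists X1 X2 : 'M[C]_(e, e + e),
   [/\ (X1 == U)%MS, (X2 == W)%MS, V = X1 + X2,
       X1 *m Q *m X1^T = 0 & X2 *m Q *m X2^T = 0 /\ col_mx X1 X2 \in unitmx].
Proof.
move=> /andP[/eqP rU iU] /andP[/eqP rV iV] /andP[/eqP rW iW] cUV cVW cUW.
have rUW : \rank (U + W)%MS = (e + e)%N by rewrite rank_adds_cap // rU rW.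
set M := col_mx U W.
have uM : M \in unitmx by rewrite -row_free_unit /row_free -(addsmxE U W).1 rUW.
set K := V *m invmx M.
set X1 := lsubmx K *m U; set X2 := rsubmx K *m W.
have VE : V = X1 + X2 by rewrite -mul_row_col hsubmxK mulmxKV.
have sX1 : (X1 <= U)%MS by apply: submxMl.
have sX2 : (X2 <= W)%MS by apply: submxMl.
have eX1 : (X1 == U)%MS.
  rewrite -(mxrank_leqif_eq sX1).2 eqn_leq mxrankS //= rU.
  have : \rank (V + W)%MS = (e + e)%N by rewrite rank_adds_cap // rV rW.
  have s : (V + W <= X1 + W)%MS.
    rewrite addsmx_sub addsmxSr andbT VE; apply: addmx_sub_adds => //.
  move/(mxrankS) : s => s r; move: (mxrank_adds_leqif X1 W).1; rewrite [X in (_ <= _ + X)%N]rW => s'.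
  by have := leq_trans s s'; rewrite r leq_add2r.
have eX2 : (X2 == W)%MS.
  rewrite -(mxrank_leqif_eq sX2).2 eqn_leq mxrankS //= rW.
  have : \rank (U + V)%MS = (e + e)%N by rewrite rank_adds_cap // rU rV.
  have s : (U + V <= U + X2)%MS.
    rewrite addsmx_sub addsmxSl /= VE; apply: addmx_sub_adds => //.
  move/(mxrankS) : s => s r; move: (mxrank_adds_leqif U X2).1; rewrite [X in (_ <= X + _)%N]rU => s'.
  by have := leq_trans s s'; rewrite r leq_add2l.
exists X1, X2; split => //; last split.
- by apply: iso_zero; apply/eqP.
- by apply: iso_zero; apply/eqP.
rewrite -row_free_unit /row_free -(addsmxE X1 X2).1.
by rewrite (adds_eqmx (eqmxP eX1) (eqmxP eX2)).1 rUW.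
Qed.

Lemma parity e (Q : 'M[C]_(e + e)) (X1 X2 : 'M[C]_(e, e + e)) :
  Q^T = Q -> Q \in unitmx -> col_mx X1 X2 \in unitmx ->
  X1 *m Q *m X1^T = 0 -> X2 *m Q *m X2^T = 0 ->
  (X1 + X2) *m Q *m (X1 + X2)^T = 0 -> ~~ odd e.
Proof.
move=> hQ uQ uL i1 i2 iV.
set S := X1 *m Q *m X2^T.
have ST : X2 *m Q *m X1^T = S^T by rewrite /S !trmx_mul trmxK hQ mulmxA.
have skew : S^T = - S.
  apply/eqP; rewrite -addr_eq0; apply/eqP.
  move: iV; rewrite linearD /= !mulmxDl !mulmxDr i1 i2 ST add0r addr0.
  by rewrite addrC.
have LQL : col_mx X1 X2 *m Q *m (col_mx X1 X2)^T = block_mx 0 S S^T 0.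
  by rewrite tr_col_mx mul_col_mx mul_col_row i1 i2 ST.
have : \det (block_mx 0 S S^T 0) != 0.
  by rewrite -LQL -unitfE -unitmxE !unitmx_mul uL uQ unitmx_tr uL.
have -> : block_mx 0 S S^T 0 = block_mx 0 1%:M 1%:M 0 *m block_mx S^T 0 0 S.
  by rewrite mulmx_block !mul0mx !mul1mx !addr0 !add0r.
rewrite det_mulmx det_ublock !mulf_eq0 !negb_or => /and3P[_ _ dS].
have := congr1 determinant skew; rewrite det_tr -scaleN1r detZ => h.
apply/negP => oe; move: h; rewrite -signr_odd oe expr1 mulN1r => /eqP.
by rewrite -addr_eq0 -mulr2n mulrn_eq0 /= (negPf dS).
Qed.

Lemma rank_Yf e (s t : C) : (s, t) != (0, 0) -> \rank (Yf e s t) = e.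
Proof.
move=> st; apply/eqP; rewrite eqn_leq rank_leq_row /=.
have [t0|t0] := eqVneq t 0.
  have s0 : s != 0 by apply: contraNneq st => ->; rewrite t0.
  have h : Yf e s t *m col_mx 0 (s^-1%:M) = 1%:M.
    by rewrite mul_row_col mulmx0 add0r -scalar_mxM mulfV.
  by rewrite -{1}(mxrank1 C e) -h mxrankM_maxl.
have h : Yf e s t *m col_mx (t^-1%:M) 0 = 1%:M.
  by rewrite mul_row_col mulmx0 addr0 -scalar_mxM mulfV.
by rewrite -{1}(mxrank1 C e) -h mxrankM_maxl.
Qed.

Definition pf e (L : 'M[C]_(e + e)) (sg : {ffun 'I_e -> 'I_(e + e)}) (k : 'I_e.+1) : C :=
  \sum_(phi : {ffun 'I_e -> 'I_(e + e)}) (\prod_i L (phi i) (sg i)) *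
     (if val k == nhigh phi then \det (mxsub id phi (Yf e 1 1)) else 0).

Lemma nhigh_le e (phi : {ffun 'I_e -> 'I_(e + e)}) : (nhigh phi <= e)%N.
Proof. by rewrite /nhigh -[X in (_ <= X)%N]card_ord max_card. Qed.

Lemma pfE e (L : 'M[C]_(e + e)) sg s t :
  hform_eval (pf L sg) s t = \det (mxsub id sg (Yf e s t *m L)).
Proof.
rewrite /pf hform_lin -mulmx_colsub cauchy_binet; apply: eq_bigr => phi _.
rewrite hform_mono ?nhigh_le // [in RHS]minor_Yf; congr (_ * _).
by apply: eq_big => // i _; rewrite mxE.
Qed.

Lemma scal_form m n (Q : 'M[C]_n) (A B : 'M[C]_(m, n)) (a b : C) :
  (a *: A) *m Q *m (b *: B)^T = (a * b) *: (A *m Q *m B^T).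
Proof. by rewrite linearZ /= -scalemxAr -!scalemxAl scalerA mulrC. Qed.

Lemma exist_part e (Q : 'M[C]_(e + e)) (X1 X2 : 'M[C]_(e, e + e)) :
  X1 *m Q *m X1^T = 0 -> X2 *m Q *m X2^T = 0 ->
  (X1 + X2) *m Q *m (X1 + X2)^T = 0 -> col_mx X1 X2 \in unitmx ->
  OG_morphism_of_Gdeg Q e (fun s t => Yf e s t *m col_mx X1 X2).
Proof.
move=> i1 i2 iV uL; set L := col_mx X1 X2.
have fE : forall s t, Yf e s t *m L = t *: X1 + s *: X2.
  by move=> s t; rewrite mul_row_col !mul_scalar_mx.
have cross : X1 *m Q *m X2^T + X2 *m Q *m X1^T = 0.
  by move: iV; rewrite linearD /= !mulmxDl !mulmxDr i1 i2 add0r addr0.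
split.
  move=> s t st; rewrite /isotropic_of_dim mxrankMfree ?row_free_unit // rank_Yf // eqxx /=.
  rewrite fE linearD /= !mulmxDl !mulmxDr !scal_form i1 i2 !scaler0 add0r addr0.
  by rewrite mulrC -scalerDr cross scaler0.
exists (pf L); split.
  move=> s t st.
  have : [exists sg, hform_eval (pf L sg) s t != 0].
    case: (boolP [exists sg, hform_eval (pf L sg) s t != 0]) => // /existsPn H.
    have H' : forall sg : {ffun 'I_e -> 'I_(e + e)}, \det (mxsub id sg (Yf e s t *m L)) = 0.
      by move=> sg; rewrite -pfE; apply/eqP; move: (H sg); rewrite negbK.
    have Z : forall tau : {ffun 'I_e -> 'I_(e + e)}, \det (mxsub id tau (Yf e s t)) = 0.
      move=> tau; have -> : Yf e s t = (Yf e s t *m L) *m invmx L by rewrite mulmxK.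
      by rewrite -mulmx_colsub cauchy_binet big1 // => phi _; rewrite H' mulr0.
    move: (Z lowf) (Z (highf e)); rewrite Yf_low Yf_high !det_scalar.
    move=> /eqP; rewrite expf_eq0 => /andP[_ /eqP t0] /eqP.
    rewrite expf_eq0 => /andP[_ /eqP s0].
    by move: st; rewrite t0 s0 eqxx.
  by case/existsP => sg h; exists sg.
move=> s t st; exists (Yf e s t *m L); split; first by rewrite submx_refl.
by move=> sg; rewrite pfE.
Qed.

Lemma nhigh_swp e (tau : {ffun 'I_e -> 'I_(e + e)}) :
  nhigh [ffun i => swp (tau i)] = (e - nhigh tau)%N.
Proof.
have -> : (e - nhigh tau)%N = #|[pred k | ~~ (e <= tau k)%N]|.
  rewrite /nhigh -[X in (X - _)%N]card_ord -(cardC [pred k | (e <= tau k)%N]).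
  by rewrite addKn; apply: eq_card => k; rewrite !inE.
apply: eq_card => k; rewrite !inE ffunE /swp.
case: splitP => j hj /=; first by rewrite hj -ltnNge ltn_ord leq_addr.
by rewrite hj leq_addr /= leqNgt ltn_ord.
Qed.

Lemma fE e (X1 X2 : 'M[C]_(e, e + e)) s t :
  Yf e s t *m col_mx X1 X2 = t *: X1 + s *: X2.
Proof. by rewrite mul_row_col !mul_scalar_mx. Qed.

Lemma pt_nz (a b : C) : (a, b) != (0, 0) -> (a == 0) = false \/ (b == 0) = false.
Proof. by rewrite xpair_eqE negb_and => /orP[]/negPf; [left|right]. Qed.

Lemma uniq_part e (Q : 'M[C]_(e + e)) (X1 X2 : 'M[C]_(e, e + e))
  (g : C -> C -> 'M[C]_(e, e + e)) :
  col_mx X1 X2 \in unitmx ->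
  OG_morphism_of_Gdeg Q e g ->
  (g 0 1 == X1)%MS -> (g 1 1 == (X1 + X2)%R)%MS -> (g 1 0 == X2)%MS ->
  forall s t, (s, t) != (0, 0) -> (g s t == Yf e s t *m col_mx X1 X2)%MS.
Proof.
move=> uL [giso [p [_ hp]]] g0 g1 ginf.
set L := col_mx X1 X2.
pose q (sg : {ffun 'I_e -> 'I_(e + e)}) (k : 'I_e.+1) : C :=
  \sum_(phi : {ffun 'I_e -> 'I_(e + e)}) (\prod_i invmx L (phi i) (sg i)) * p phi k.
have qE : forall s t, (s, t) != (0, 0) -> exists Y : 'M[C]_(e, e + e),
    [/\ (Y *m L == g s t)%MS, \rank Y = e &
        forall sg : {ffun 'I_e -> 'I_(e + e)}, \det (mxsub id sg Y) = hform_eval (q sg) s t].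
  move=> s t st; have [B [eB mB]] := hp s t st.
  exists (B *m invmx L); split.
  - by rewrite mulmxKV.
  - rewrite mxrankMfree ?row_free_unit ?unitmx_inv // (eqmx_rank eB).
    by case/andP: (giso s t st) => /eqP.
  move=> sg; rewrite /q hform_lin -mulmx_colsub cauchy_binet.
  apply: eq_bigr => phi _; rewrite (mB phi : \det (mxsub id phi B) = _); congr (_ * _).
  by apply: eq_big => // i _; rewrite mxE.
have ptm : forall a b : C, (a, b) != (0, 0) -> (g a b == Yf e a b *m L)%MS ->
    exists2 k, k != 0 & forall sg : {ffun 'I_e -> 'I_(e + e)},
      hform_eval (q sg) a b = k * \det (mxsub id sg (Yf e a b)).
  move=> a b ab gab; have [Y [eY rY mY]] := qE a b ab.
  have eYL : (Y *m L :=: Yf e a b *m L)%MS.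
    exact: eqmx_trans (eqmxP eY) (eqmxP gab).
  have eYY : (Y == Yf e a b)%MS.
    have h := eqmxMr (invmx L) eYL; rewrite !mulmxK // in h; exact/eqmxP.
  have /submxP [D eD] : (Y <= Yf e a b)%MS by case/andP: eYY.
  move: rY => rY.
  have uD : D \in unitmx.
    rewrite -row_free_unit /row_free eqn_leq rank_leq_row /=.
    by rewrite -[X in (X <= _)%N]rY eD mxrankM_maxl.
  exists (\det D); first by rewrite -unitfE -unitmxE.
  by move=> sg; rewrite -mY eD -mulmx_colsub det_mulmx.
have nz01 : ((0 : C), (1 : C)) != (0, 0) by rewrite xpair_eqE oner_eq0 andbF.
have nz10 : ((1 : C), (0 : C)) != (0, 0) by rewrite xpair_eqE oner_eq0.
have nz11 : ((1 : C), (1 : C)) != (0, 0) by rewrite xpair_eqE oner_eq0.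
have e01 : (g 0 1 == Yf e 0 1 *m L)%MS by rewrite /L fE scale1r scale0r addr0.
have e10 : (g 1 0 == Yf e 1 0 *m L)%MS by rewrite /L fE scale1r scale0r add0r.
have e11 : (g 1 1 == Yf e 1 1 *m L)%MS by rewrite /L fE !scale1r.
have [k0 k0n h0] := ptm 0 1 nz01 e01.
have [ki kin hi] := ptm 1 0 nz10 e10.
have [k1 k1n h1] := ptm 1 1 nz11 e11.
pose QS sg := \poly_(k < e.+1) q sg (inord k).
pose QT sg := \poly_(k < e.+1) q sg (inord (e - k)).
have zero01 : forall u : {ffun 'I_e -> 'I_(e + e)}, forall k, (e <= u k)%N ->
    \det (mxsub id u (Yf e (0 : C) 1)) = 0.
  move=> u k hk; have : (0 < nhigh u)%N by apply/card_gt0P; exists k; rewrite inE.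
  by move=> hp0; rewrite minor_Yf expr0n (gtn_eqF hp0) mul0r mulr0.
have dS : forall sg, 'X^(nhigh sg) %| QS sg.
  apply: core.
  - move=> x; have nz : ((x, 1) : C * C) != (0, 0) by rewrite xpair_eqE oner_eq0 andbF.
    have [Y [_ _ mY]] := qE x 1 nz; by exists Y => sg; rewrite mY hform_s1.
  - by move=> sg k hk; rewrite -hform_s1 h0 (zero01 sg k hk) mulr0.
  - by rewrite -hform_s1 h0 Yf_low det1 mulr1.
have dT : forall sg, 'X^(nhigh sg) %| QT [ffun i => swp (sg i)].
  apply: (core (Q := fun sg => QT [ffun i => swp (sg i)])).
  - move=> x; have nz : ((1, x) : C * C) != (0, 0) by rewrite xpair_eqE oner_eq0.
    have [Y [_ _ mY]] := qE 1 x nz; exists (mxsub id (@swp e) Y) => sg.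
    by rewrite colsub_swp_comp mY hform_1t.
  - move=> sg k hk; rewrite -hform_1t hi -(colsub_swp_comp sg) colsub_swp_Yf.
    by rewrite (zero01 sg k hk) mulr0.
  - by rewrite -hform_1t hi -colsub_swp_comp colsub_swp_Yf Yf_low det1 mulr1.
have vanish : forall (tau : {ffun 'I_e -> 'I_(e + e)}) (k : 'I_e.+1),
    val k != nhigh tau -> q tau k = 0.
  move=> tau k hk; case: (ltngtP k (nhigh tau)) => hk'; last by move/eqP: hk.
    by have := coef_dvdX (dS tau) hk'; rewrite coef_poly ltn_ord inord_val.
  have dT' := dT [ffun i => swp (tau i)].
  have ff : [ffun i => swp ([ffun i => swp (tau i)] i)] = tau.
    by apply/ffunP => i; rewrite !ffunE swpK.
  rewrite ff nhigh_swp in dT'.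
  have kle : (k <= e)%N by rewrite -ltnS ltn_ord.
  have lt : (e - k < e - nhigh tau)%N by rewrite ltn_sub2lE.
  have := coef_dvdX dT' lt; rewrite coef_poly ltnS leq_subr subKn //.
  by rewrite inord_val.
have form : forall (tau : {ffun 'I_e -> 'I_(e + e)}) s t,
    hform_eval (q tau) s t = k1 * \det (mxsub id tau (Yf e s t)).
  move=> tau s t; rewrite (@hform_single _ (nhigh tau)) ?nhigh_le //; last exact: vanish.
  have := h1 tau; rewrite (@hform_single _ (nhigh tau)) ?nhigh_le //; last exact: vanish.
  rewrite !expr1n !mulr1 => ->.
  by rewrite [in RHS]minor_Yf -mulrA.
move=> s t st; have [Y [eY _ mY]] := qE s t st.
have PY : (Y == Yf e s t)%MS.
  by apply: (plucker (k := k1)) => // tau; rewrite mY form.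
apply/eqmxP; apply: eqmx_trans (eqmx_sym (eqmxP eY)) _.
by apply: eqmxMr; apply/eqmxP.
Qed.

Lemma eqmx_tr_b m1 m2 m3 n (A : 'M[C]_(m1, n)) (B : 'M[C]_(m2, n)) (D : 'M[C]_(m3, n)) :
  (A == B)%MS -> (D == B)%MS -> (A == D)%MS.
Proof.
move=> /eqmxP h1 /eqmxP h2; apply/eqmxP; exact: eqmx_trans h1 (eqmx_sym h2).
Qed.

Unset Implicit Arguments. Set Strict Implicit.

Theorem mainTheorem10 (e : nat) (Q : 'M[C]_(e + e))
  (U V W : 'M[C]_(e, e + e)) :
  nondeg_symmetric Q ->
  isotropic_of_dim Q U -> isotropic_of_dim Q V -> isotropic_of_dim Q W ->
  (U :&: V <= (0 : 'M[C]_(e + e)))%MS -> (V :&: W <= (0 : 'M[C]_(e + e)))%MS -> (U :&: W <= (0 : 'M[C]_(e + e)))%MS ->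
  exists d : nat, e = d.*2 /\
    exists f : C -> C -> 'M[C]_(e, e + e),
      [/\ OG_morphism_of_deg Q d f,
          (f 0 1 == U)%MS, (f 1 1 == V)%MS, (f 1 0 == W)%MS &
          forall g : C -> C -> 'M[C]_(e, e + e),
            OG_morphism_of_deg Q d g ->
            (g 0 1 == U)%MS -> (g 1 1 == V)%MS -> (g 1 0 == W)%MS ->
            forall s t : C, (s, t) != (0, 0) -> (g s t == f s t)%MS].
Proof.
move=> /andP[/eqP hQ uQ] iU iV iW cUV cVW cUW.
have [X1 [X2 [eX1 eX2 VE i1 [i2 uL]]]] := setup iU iV iW cUV cVW cUW.
have iV' : (X1 + X2) *m Q *m (X1 + X2)^T = 0 by rewrite -VE; case/andP: iV => _ /eqP.
have ev : ~~ odd e := parity hQ uQ uL i1 i2 iV'.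
have he : e = (e./2).*2 by rewrite -[LHS]odd_double_half (negPf ev) add0n.
exists e./2; split => //.
exists (fun s t => Yf e s t *m col_mx X1 X2); split.
- by rewrite /OG_morphism_of_deg -he; apply: exist_part.
- by rewrite fE scale1r scale0r addr0.
- by rewrite fE !scale1r -VE submx_refl.
- by rewrite fE scale1r scale0r add0r.
move=> g hg g0 g1 ginf s t st.
rewrite /OG_morphism_of_deg -he in hg.
apply: (uniq_part uL hg) => //.
- exact: eqmx_tr_b g0 eX1.
- by rewrite -VE.
- exact: eqmx_tr_b ginf eX2.
Qed.
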